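(* Consider the stochastic quadratic problem in the context, and let $\eta_0,\dots,\eta_T$ be any deterministic learning rates. Run SGD $w_{t+1}=w_t-\eta_t(H(\xi_t)w_t-b(\xi_t))$ for $t=0,\dots,T$ from a deterministic $w_0$. Assume $\mathbb{E}_\xi[n_tn_t^\top]\preceq\sigma^2H$ for all $t$, and let $P_t=I-\eta_tH$. Let $\lambda_1,\dots,\lambda_d$ be the eigenvalues of $H$. Then $$\sum_{\tau=0}^T\mathbb{E}\left[\eta_\tau^2\,n_\tau^\top P_T\cdots P_{\tau+1}HP_{\tau+1}\cdots P_T\,n_\tau\right]\le\sigma^2\sum_{j=1}^d\lambda_j^2\sum_{k=0}^T\eta_k^2\prod_{i=k+1}^T(1-\eta_i\lambda_j)^2 .$$
   Context: Let $\xi$ be a random data sample, $H(\xi)\in\mathbb{R}^{d\times d}$ a random symmetric matrix and $b(\xi)\in\mathbb{R}^d$ a random vector. Define $f(w,\xi)=\frac12w^\top H(\xi)w-b(\xi)^\top w$. Set $H=\mathbb{E}H(\xi)$, assumed positive definite, and $b=\mathbb{E}b(\xi)$, with $w_*=H^{-1}b$. The samples $\xi_t$ are i.i.d. copies of $\xi$, and $n_t=(Hw_t-b)-(H(\xi_t)w_t-b(\xi_t))$. *)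

(* Defs.v *)
From HB Require Import structures.
From mathcomp Require Import all_boot all_order all_algebra.
From mathcomp Require Import all_classical all_reals all_analysis.
Set Implicit Arguments. Unset Strict Implicit. Unset Printing Implicit Defensive.
Import Order.TTheory GRing.Theory Num.Theory.
Local Open Scope ring_scope.

Section Defs.
Context {R : realType} {dX : measure_display} {X : measurableType dX}.

(* Expectation over i.i.d. samples (xi_0, ..., xi_{N-1}) ~ mu^{N}, of a
   nonnegative (extended-real valued) function of the sample list:
   iterated integral  \int mu(dxi_0) ... \int mu(dxi_{N-1}) f [:: xi_0; ...; xi_{N-1}]. *)
Fixpoint iid_expect (mu : {measure set X -> \bar R}) (N : nat)
    (f : seq X -> \bar R) : \bar R :=
  match N with
  | 0 => f [::]
  | N'.+1 => (\int[mu]_x iid_expect mu N' (fun l => f (x :: l)))%E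
  end.

Fixpoint sgd (d : nat) (Hx : X -> 'M[R]_d) (bx : X -> 'cV[R]_d)
    (eta : nat -> R) (t : nat) (w : 'cV[R]_d) (l : seq X) : 'cV[R]_d :=
  match l with
  | [::] => w
  | x :: l' => sgd Hx bx eta t.+1 (w - eta t *: (Hx x *m w - bx x)) l'
  end.

Definition noise (d : nat) (Hx : X -> 'M[R]_d) (bx : X -> 'cV[R]_d)
    (H : 'M[R]_d) (b : 'cV[R]_d) (w : 'cV[R]_d) (x : X) : 'cV[R]_d :=
  (H *m w - b) - (Hx x *m w - bx x).

End Defs.

Definition mxprod {R : pzRingType} (d : nat) (F : nat -> 'M[R]_d) (l : seq nat)
  : 'M[R]_d := foldr (fun i A => F i *m A) 1%:M l.

Definition posdef {R : realType} (d : nat) (A : 'M[R]_d) : Prop :=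
  forall v : 'cV[R]_d, v != 0 -> 0 < (v^T *m A *m v) 0 0.

(* Main.v *)
Require Import Defs.
From HB Require Import structures.
From mathcomp Require Import all_boot all_order all_algebra.
From mathcomp Require Import all_classical all_reals all_analysis.
From mathcomp Require Import ring lra.
Import Order.TTheory GRing.Theory Num.Theory.
Local Open Scope ring_scope.

Section Spec.
Context {R : realType}.

Lemma vvT_E n (v : 'rV[R]_n) : (v *m v^T) 0 0 = \sum_j v 0 j ^+ 2.
Proof. by rewrite mxE; apply: eq_bigr => j _; rewrite mxE expr2. Qed.

Lemma vvT_gt0 n (v : 'rV[R]_n) : v != 0 -> 0 < (v *m v^T) 0 0.
Proof.
move=> vn0; rewrite vvT_E.
have [j vj] : exists j, v 0 j != 0.
  apply/existsP; apply: contraR vn0 => /existsPn H; apply/eqP/rowP => j.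
  by rewrite mxE; apply/eqP; move: (H j); rewrite negbK.
rewrite (bigD1 j) //=.
have h1 : 0 < v 0 j ^+ 2 by rewrite exprn_even_gt0.
have h2 : 0 <= \sum_(i | i != j) v 0 i ^+ 2 by apply: sumr_ge0 => i _; exact: sqr_ge0.
lra.
Qed.

Lemma e0_mul_tr n (x : 'rV[R]_n.+1) : 'e_0 *m x^T = (x 0 0)%:M.
Proof. by rewrite -rowE; apply/matrixP => i j; rewrite !ord1 !mxE. Qed.

Lemma householder n (u : 'rV[R]_n.+1) : u *m u^T = 1%:M ->
  exists Rm : 'M[R]_n.+1, [/\ Rm^T = Rm, Rm *m Rm = 1%:M & 'e_0 *m Rm = u].
Proof.
move=> uu.
have [ue|une] := eqVneq u (delta_mx 0 0).
  by exists 1%:M; split; rewrite ?trmx1 ?mulmx1 ?ue.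
set w := 'e_0 - u.
have wn0 : w != 0 by rewrite subr_eq0 eq_sym.
set s := (w *m w^T) 0 0.
have s_gt0 : 0 < s := @vvT_gt0 n.+1 w wn0.
have ee : 'e_0 *m ('e_0 : 'rV[R]_n.+1)^T = 1%:M.
  by rewrite e0_mul_tr mxE.
have ww : w *m w^T = (2 * w 0 0)%:M.
  rewrite /w linearB /= mulmxBl !mulmxBr ee e0_mul_tr uu.
  rewrite -[u *m _]trmxK trmx_mul trmxK e0_mul_tr tr_scalar_mx.
  rewrite !mxE eqxx /= mulr1n.
  apply/matrixP => i j; rewrite !ord1 !mxE /= !mulr1n; lra.
have sE : s = 2 * w 0 0 by rewrite /s ww mxE mulr1n.
have w00 : 0 < w 0 0 by move: s_gt0; rewrite sE pmulr_rgt0.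
have w0n : w 0 0 != 0 by rewrite gt_eqF.
set c := 2 / s.
exists (1%:M - c *: (w^T *m w)); split.
- by rewrite linearB /= linearZ /= trmx1 trmx_mul trmxK.
- have WW : (w^T *m w) *m (w^T *m w) = (2 * w 0 0) *: (w^T *m w).
    by rewrite mulmxA -[w^T *m w *m w^T]mulmxA ww mul_mx_scalar scalemxAl.
  move: WW; move: (w^T *m w) => W WW.
  rewrite mulmxBl !mulmxBr mul1mx mulmx1 -!scalemxAl -!scalemxAr scalerA WW scalerA.
  have cc : c * c * (2 * w 0 0) = c + c.
    by rewrite /c sE; field; rewrite w0n.
  rewrite cc mul1mx; apply/matrixP => i j; rewrite !mxE; lra.
- rewrite mulmxBr mulmx1 -scalemxAr mulmxA e0_mul_tr mul_scalar_mx scalerA.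
  have -> : c * w 0 0 = 1 by rewrite /c sE; field; rewrite w0n.
  by rewrite scale1r /w opprB addrC subrK.
Qed.

Lemma char_poly_orth d (O A : 'M[R]_d) : O *m O^T = 1%:M ->
  char_poly (O^T *m A *m O) = char_poly A.
Proof.
move=> OO; have OQ1 : O^T *m O = 1%:M by apply: mulmx1C.
rewrite /char_poly /char_poly_mx.
have -> : 'X%:M - map_mx polyC (O^T *m A *m O) =
   (map_mx polyC O^T) *m ('X%:M - map_mx polyC A) *m (map_mx polyC O).
  rewrite mulmxBr mulmxBl !map_mxM mul_mx_scalar -scalemxAl -map_mxM.
  by rewrite -[X in 'X *: X]map_mxM OQ1 map_mx1 scalemx1.
rewrite !det_mulmx mulrC mulrA -det_mulmx -map_mxM OO map_mx1 det1 mul1r.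
done.
Qed.

Lemma char_poly_block1 d (a : R) (A : 'M[R]_d) :
  char_poly (@block_mx R 1 d 1 d a%:M 0 0 A) = ('X - a%:P) * char_poly A.
Proof.
rewrite /char_poly /char_poly_mx map_block_mx (scalar_mx_block 1 d) map_scalar_mx /=.
rewrite !map_mx0 (opp_block_mx) add_block_mx !subr0 det_ublock.
by rewrite det_mx11 !mxE /= !mulr1n.
Qed.


Lemma real_spectral d (H : 'M[R]_d) (lam : 'I_d -> R) :
  H^T = H -> char_poly H = \prod_(j < d) ('X - (lam j)%:P) ->
  exists O : 'M[R]_d, exists mu : 'rV[R]_d,
    O *m O^T = 1%:M /\ H = O^T *m diag_mx mu *m O.
Proof.
elim: d H lam => [|d IH] H lam HT Hchar.
  by exists 1%:M, 0; split; apply/matrixP => -[].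
have : root (char_poly H) (lam 0).
  by rewrite Hchar big_ord_recl rootM root_XsubC eqxx.
rewrite -eigenvalue_root_char => /eigenvalueP [v vH vn0].
set l0 := lam 0.
have vv := @vvT_gt0 d.+1 v vn0.
set k := Num.sqrt ((v *m v^T) 0 0).
have k0 : 0 < k by rewrite sqrtr_gt0.
set u := k^-1 *: v.
have uu : u *m u^T = 1%:M.
  rewrite /u linearZ /= -scalemxAl -scalemxAr scalerA (mx11_scalar (v *m v^T)).
  rewrite -/k scale_scalar_mx; congr (_%:M).
  rewrite -(sqr_sqrtr (ltW vv)) -/k; field; exact: lt0r_neq0.
have uH : u *m H = l0 *: u by rewrite /u -scalemxAl vH !scalerA mulrC.
have [Rm [RmT RmRm e0Rm]] := @householder d u uu.
set B := Rm *m H *m Rm.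
have BT : B^T = B by rewrite /B !trmx_mul RmT HT mulmxA.
have e0B : 'e_0 *m B = l0 *: ('e_0 : 'rV[R]_d.+1).
  by rewrite /B !mulmxA e0Rm uH -scalemxAl -e0Rm -mulmxA RmRm mulmx1.
have BE : B = Rm *m H *m Rm by [].
clearbody B.
have Brow : forall i j, val i = 0%N -> B i j = l0 * (val j == 0%N)%:R.
  move=> i j /eqP i0; have -> : i = 0 by apply/val_inj/eqP.
  have := congr1 (fun M : 'rV[R]_d.+1 => M 0 j) e0B; rewrite /= -rowE !mxE => ->.
  by rewrite eqxx.
have Bcol : forall i j, val j = 0%N -> B i j = l0 * (val i == 0%N)%:R.
  by move=> i j j0; rewrite -BT mxE Brow.
set H' := @drsubmx R 1 d 1 d B.
have Bblk : B = @block_mx R 1 d 1 d l0%:M 0 0 H'.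
  have ul : @ulsubmx R 1 d 1 d B = l0%:M.
    by apply/matrixP => i j; rewrite !ord1 !mxE Brow //= mulr1.
  have ur : @ursubmx R 1 d 1 d B = 0.
    by apply/matrixP => i j; rewrite !ord1 !mxE Brow //= mulr0.
  have dl : @dlsubmx R 1 d 1 d B = 0.
    by apply/matrixP => i j; rewrite !ord1 !mxE Bcol //= mulr0.
  by rewrite -[B](@submxK R 1 d 1 d) ul ur dl.
have cB : char_poly B = char_poly H.
  by rewrite BE -{1}RmT char_poly_orth // RmT.
have cH' : char_poly H' = \prod_(j < d) ('X - (lam (lift 0 j))%:P).
  apply: (@mulfI _ ('X - l0%:P)); first by rewrite polyXsubC_eq0.
  rewrite -char_poly_block1 -Bblk cB Hchar big_ord_recl.
  done.
have HpT : H'^T = H' by rewrite /H' trmx_drsub BT.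
have [Q1 [mu1 [QQ H1E]]] := IH H' _ HpT cH'.
have HB : H = Rm *m B *m Rm.
  by rewrite BE !mulmxA RmRm mul1mx -mulmxA RmRm mulmx1.
have d1 : diag_mx (l0%:M : 'rV[R]_1) = l0%:M.
  by apply/matrixP => i j; rewrite !ord1 !mxE.
exists (@block_mx R 1 d 1 d 1%:M 0 0 Q1 *m Rm), (@row_mx R 1 1 d l0%:M mu1).
split.
  rewrite trmx_mul (@tr_block_mx _ 1 d 1 d) !trmx0 trmx1 mulmxA -[_ *m Rm *m Rm^T]mulmxA.
  rewrite RmT RmRm mulmx1 (@mulmx_block _ 1 d 1 d 1 d) !mulmx1 !mul0mx !mulmx0 !addr0 !add0r QQ.
  by rewrite -scalar_mx_block.
rewrite trmx_mul (@tr_block_mx _ 1 d 1 d) !trmx0 trmx1 RmT (@diag_mx_row _ d 1) d1.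
rewrite {1}HB Bblk H1E !mulmxA; congr (_ *m _); rewrite -!mulmxA; congr (_ *m _).
rewrite !(@mulmx_block _ 1 d 1 d 1 d) !mulmx1 !mul1mx !mul0mx !mulmx0 !addr0 !add0r.
by rewrite mulmx0.
Qed.
End Spec.

Section Iid.
Context {R : realType} {dX : measure_display} {X : measurableType dX}.
Context {mu : probability X R}.
Local Open Scope ereal_scope.

Lemma le_integral_cst (g : X -> \bar R) (c : \bar R) :
  0 <= c -> (forall x, 0 <= g x <= c) -> \int[mu]_x g x <= c.
Proof.
move=> c0 gc.
have musT : mu setT = 1 by exact: probability_setT.
have -> : c = \int[mu]_x (cst c x).
  by rewrite integral_cst // -[X in _ * X]/(mu setT) musT mule1.
rewrite ge0_integralTE; last by move=> x; have /andP[] := gc x.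
rewrite ge0_integralTE //.
apply: ereal_sup_le => _ [h /= hg <-]; exists h => //= x.
by apply: (le_trans (hg x)); have /andP[] := gc x.
Qed.

Lemma iid_cst N c : iid_expect mu N (fun _ => c) = c.
Proof.
have musT : mu setT = 1 by exact: probability_setT.
elim: N => //= N ->.
by rewrite integral_cst // -[X in _ * X]/(mu setT) musT mule1.
Qed.

Lemma iid_le a N (f : seq X -> \bar R) c : 0 <= c ->
  (forall l, size l = a -> 0 <= iid_expect mu N (fun l' => f (l ++ l')) <= c) ->
  0 <= iid_expect mu (a + N) f <= c.
Proof.
move=> c0; elim: a f => [|a IH] f H0.
  exact: (H0 [::]).
rewrite addSn /=.
have Hx : forall x, 0 <= iid_expect mu (a + N) (fun l => f (x :: l)) <= c.
  by move=> x; apply: IH => l sl; apply: (H0 (x :: l)); rewrite /= sl.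
apply/andP; split.
  by apply: integral_ge0 => x _; have /andP[] := Hx x.
exact: le_integral_cst.
Qed.

Lemma iid_le2 a N (f : seq X -> \bar R) (g : seq X -> X -> \bar R) c : 0 <= c ->
  (forall l, size l = a -> forall x l', f (l ++ x :: l') = g l x) ->
  (forall l, size l = a -> 0 <= \int[mu]_x g l x <= c) ->
  0 <= iid_expect mu (a + N.+1) f <= c.
Proof.
move=> c0 Hf Hg; apply: iid_le => // l sl /=.
under eq_integral => x _ do rewrite (funext (fun l0 => Hf l sl x l0)) iid_cst.
exact: Hg.
Qed.

End Iid.

Section Alg.
Context {R : realType} {d : nat} {O H : 'M[R]_d} {m : 'rV[R]_d}.
Hypothesis OO : O *m O^T = 1%:M.
Hypothesis HE : H = O^T *m diag_mx m *m O.

Lemma OTO : O^T *m O = 1%:M. Proof. exact: mulmx1C. Qed.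

Lemma conj_mul (A B : 'M[R]_d) :
  (O^T *m A *m O) *m (O^T *m B *m O) = O^T *m (A *m B) *m O.
Proof. by rewrite -!mulmxA (mulmxA O) OO mul1mx !mulmxA. Qed.

Lemma P_diag (e : R) :
  1%:M - e *: H = O^T *m diag_mx (\row_k (1 - e * m 0 k)) *m O.
Proof.
have -> : diag_mx (\row_k (1 - e * m 0 k)) = 1%:M - e *: diag_mx m.
  by apply/matrixP => i j; rewrite !mxE; case: (i == j) => /=; rewrite ?mulr1n ?mulr0n; lra.
by rewrite mulmxBr mulmxBl mulmx1 OTO HE -scalemxAr -scalemxAl.
Qed.

Lemma mxprod_diag (eta : nat -> R) (l : seq nat) :
  mxprod (fun i => 1%:M - eta i *: H) l =
  O^T *m diag_mx (\row_k \prod_(i <- l) (1 - eta i * m 0 k)) *m O.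
Proof.
elim: l => [|i l IH] /=.
  have -> : diag_mx (\row_k \prod_(i <- [::]) (1 - eta i * m 0 k)) = 1%:M.
    by apply/matrixP => i j; rewrite !mxE big_nil.
  by rewrite mulmx1 OTO.
rewrite IH P_diag conj_mul mulmx_diag; congr (_ *m _ *m _).
by congr diag_mx; apply/rowP => k; rewrite !mxE big_cons.
Qed.

Lemma quad_diag (g : 'rV[R]_d) (x : 'cV[R]_d) :
  (x^T *m (O^T *m diag_mx g *m O) *m x) 0 0 =
  \sum_k g 0 k * ((row k O *m x) 0 0) ^+ 2.
Proof.
rewrite !mulmxA -trmx_mul -mulmxA mul_mx_diag mxE.
apply: eq_bigr => k _; rewrite !mxE.
under [X in _ = _ * X ^+ 2]eq_bigr do rewrite mxE.
by rewrite expr2; ring.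
Qed.

Lemma rowrow (i k : 'I_d) : (row i O *m (row k O)^T) 0 0 = (i == k)%:R.
Proof.
have := congr1 (fun M : 'M[R]_d => M i k) OO; rewrite !mxE => <-.
by apply: eq_bigr => j _; rewrite !mxE.
Qed.

Lemma quad_row (k : 'I_d) : ((row k O) *m H *m (row k O)^T) 0 0 = m 0 k.
Proof.
rewrite -[row k O in X in (X *m H)]trmxK HE quad_diag (bigD1 k) //= rowrow eqxx.
rewrite big1 ?addr0 ?expr1n ?mulr1 // => i ik.
by rewrite rowrow (negbTE ik) expr0n /= mulr0.
Qed.

End Alg.

Section Int.
Context {R : realType} {dX : measure_display} {X : measurableType dX}.
Context {mu : probability X R}.
Context {d : nat} {Hx : X -> 'M[R]_d} {bx : X -> 'cV[R]_d} {H : 'M[R]_d} {b : 'cV[R]_d}.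
Hypothesis Hx_meas : forall i j, measurable_fun setT (fun x => Hx x i j).
Hypothesis bx_meas : forall i j, measurable_fun setT (fun x => bx x i j).

Lemma meas_rn (r : 'rV[R]_d) w :
  measurable_fun setT (fun x => (r *m noise Hx bx H b w x) 0 0).
Proof.
rewrite /noise.
have -> : (fun x => (r *m ((H *m w - b) - (Hx x *m w - bx x))) 0 0) =
  (fun x => \sum_i (r 0 i * (H *m w - b) i 0 -
      (\sum_j r 0 i * w j 0 * Hx x i j - r 0 i * bx x i 0))).
  apply/funext => x; rewrite mxE; apply: eq_bigr => i _.
  rewrite !mxE mulrBr; congr (_ - _); rewrite mulrBr mulr_sumr; congr (_ - _).
  by apply: eq_bigr => j _; ring.
apply: measurable_sum => i.
apply: measurable_realfun.measurable_funB; first exact: measurable_cst.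
apply: measurable_realfun.measurable_funB.
  apply: measurable_sum => j.
  by apply: measurable_realfun.measurable_funM; [exact: measurable_cst|exact: Hx_meas].
by apply: measurable_realfun.measurable_funM; [exact: measurable_cst|exact: bx_meas].
Qed.


Lemma tau_bound (O : 'M[R]_d) (m g : 'rV[R]_d) (sigma c : R) w :
  O *m O^T = 1%:M -> H = O^T *m diag_mx m *m O ->
  (forall v : 'cV[R]_d,
      (\int[mu]_x (((v^T *m noise Hx bx H b w x) 0 0) ^+ 2)%:E
        <= (sigma ^+ 2 * (v^T *m H *m v) 0 0)%:E)%E) ->
  0 <= c -> (forall k, 0 <= g 0 k) ->
  (\int[mu]_x (c * ((noise Hx bx H b w x)^T *m (O^T *m diag_mx g *m O)
       *m noise Hx bx H b w x) 0 0)%:E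
   <= (c * sigma ^+ 2 * \sum_k g 0 k * m 0 k)%:E)%E.
Proof.
move=> OO HE NB c0 g0.
under eq_integral => x _ do rewrite quad_diag mulr_sumr -sumEFin.
rewrite ge0_integral_sum //; last first.
- by move=> k x _; rewrite lee_fin; apply: mulr_ge0 => //; apply: mulr_ge0 => //; exact: sqr_ge0.
- move=> k; apply/measurable_realfun.measurable_EFinP.
  apply: measurable_realfun.measurable_funM; first exact: measurable_cst.
  apply: measurable_realfun.measurable_funM; first exact: measurable_cst.
  apply: measurable_realfun.measurable_funX; exact: meas_rn.
rewrite mulr_sumr -sumEFin; apply: lee_sum => k _.
under eq_integral => x _ do rewrite mulrA EFinM.
rewrite ge0_integralZl_EFin //; last 3 first.
- by move=> x _; rewrite lee_fin sqr_ge0.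
- apply/measurable_realfun.measurable_EFinP.
  apply: measurable_realfun.measurable_funX; exact: meas_rn.
- exact: mulr_ge0.
have := NB (row k O)^T; rewrite trmxK (@quad_row _ _ O H m OO HE k) => h.
rewrite (_ : c * sigma ^+ 2 * (g 0 k * m 0 k) = (c * g 0 k) * (sigma ^+ 2 * m 0 k)); last by ring.
rewrite [X in (_ <= X)%E]EFinM (EFinM c (g 0 k)); apply: lee_wpmul2l; last exact: h.
by apply: mule_ge0; rewrite lee_fin.
Qed.

End Int.

Theorem lemma5 (R : realType) (dX : measure_display) (X : measurableType dX)
  (mu : probability X R) (d : nat)
  (Hx : X -> 'M[R]_d) (bx : X -> 'cV[R]_d) (H : 'M[R]_d) (b : 'cV[R]_d)
  (eta : nat -> R) (T : nat) (w0 : 'cV[R]_d) (sigma : R)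
  (lambda : 'I_d -> R)
  (Hx_meas : forall i j, measurable_fun setT (fun x => Hx x i j))
  (bx_meas : forall i j, measurable_fun setT (fun x => bx x i j))
  (Hx_sym : forall x, (Hx x)^T = Hx x)
  (Hx_int : forall i j, mu.-integrable setT (fun x => (Hx x i j)%:E))
  (bx_int : forall i j, mu.-integrable setT (fun x => (bx x i j)%:E))
  (H_mean : forall i j, (\int[mu]_x (Hx x i j)%:E)%E = (H i j)%:E)
  (b_mean : forall i j, (\int[mu]_x (bx x i j)%:E)%E = (b i j)%:E)
  (H_pd : posdef H)
  (noise_bound : forall (l : seq X) (v : 'cV[R]_d),
      (\int[mu]_x (((v^T *m noise Hx bx H b (sgd Hx bx eta 0 w0 l) x) 0 0) ^+ 2)%:E
        <= (sigma ^+ 2 * (v^T *m H *m v) 0 0)%:E)%E)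
  (lambda_eig : char_poly H = \prod_(j < d) ('X - (lambda j)%:P)) :
  let P := fun i : nat => 1%:M - eta i *: H in
  (\sum_(tau < T.+1)
     iid_expect mu T.+1 (fun l =>
       match drop tau l with
       | x :: _ =>
           let n := noise Hx bx H b (sgd Hx bx eta 0 w0 (take tau l)) x in
           (eta tau ^+ 2 *
             (n^T *m mxprod P (rev (iota tau.+1 (T - tau))) *m H
                  *m mxprod P (iota tau.+1 (T - tau)) *m n) 0 0)%:E
       | [::] => 0%E
       end)
   <= (sigma ^+ 2 * \sum_(j < d) (lambda j) ^+ 2 *
        \sum_(k < T.+1) (eta k ^+ 2 *
           \prod_(k.+1 <= i < T.+1) (1 - eta i * lambda j) ^+ 2))%:E)%E.
Proof.
cbv zeta.
have HT : H^T = H.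
  apply/matrixP => i j; rewrite mxE; apply/EFin_inj; rewrite -!H_mean.
  by apply: eq_integral => x _; rewrite -[in RHS](Hx_sym x) mxE.
have [Q [m [QQ HE]]] := real_spectral d H lambda HT lambda_eig.
have QTQ : Q^T *m Q = 1%:M by apply: mulmx1C.
have cH : char_poly H = \prod_(k < d) ('X - (m 0 k)%:P).
  rewrite HE char_poly_orth // char_poly_trig ?diag_mx_is_trig //.
  by apply: eq_bigr => k _; rewrite mxE eqxx mulr1n.
have hperm : perm_eq [seq m 0 k | k <- index_enum 'I_d] [seq lambda j | j <- index_enum 'I_d].
  by apply: prod_XsubC_eq; rewrite !big_map -cH lambda_eig.
have sum_perm : forall F : R -> R, \sum_(k < d) F (m 0 k) = \sum_(j < d) F (lambda j).
  move=> F; rewrite -(big_map (fun k => m 0 k) xpredT F) (perm_big _ hperm).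
  by rewrite big_map.
have m0 : forall k, 0 <= m 0 k.
  move=> k; have rn0 : (row k Q)^T != 0.
    apply/negP => /eqP r0; have := rowrow QQ k k.
    by rewrite -[row k Q]trmxK r0 trmx0 mul0mx mxE eqxx => /eqP; rewrite eq_sym oner_eq0.
  have := H_pd _ rn0; rewrite trmxK (quad_row QQ HE) => /ltW //.
pose gt (tau : nat) : 'rV[R]_d :=
  \row_k (m 0 k * (\prod_(i <- iota tau.+1 (T - tau)) (1 - eta i * m 0 k)) ^+ 2).
pose bnd (tau : nat) := eta tau ^+ 2 * sigma ^+ 2 * \sum_k gt tau 0 k * m 0 k.
have gt0 : forall tau k, 0 <= gt tau 0 k.
  by move=> tau k; rewrite mxE; apply: mulr_ge0 => //; exact: sqr_ge0.
have bnd0 : forall tau, 0 <= bnd tau.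
  move=> tau; apply: mulr_ge0; first by apply: mulr_ge0; exact: sqr_ge0.
  by apply: sumr_ge0 => k _; exact: mulr_ge0.
have MM : forall tau : nat,
    mxprod (fun i : nat => 1%:M - eta i *: H) (rev (iota tau.+1 (T - tau))) *m H *m
    mxprod (fun i : nat => 1%:M - eta i *: H) (iota tau.+1 (T - tau)) =
    Q^T *m diag_mx (gt tau) *m Q.
  move=> tau; rewrite !(mxprod_diag QQ HE) [X in _ *m X *m _]HE !(conj_mul QQ) !mulmx_diag.
  congr (_ *m diag_mx _ *m _); apply/rowP => k; rewrite !mxE big_rev; ring.
apply: (@le_trans _ _ (\sum_(tau < T.+1) (bnd tau)%:E)).
  apply: lee_sum => tau _.
  have e : T.+1 = (tau + (T - tau).+1)%N by rewrite addnS subnKC // -ltnS.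
  suff: (0 <= iid_expect mu (tau + (T - tau).+1) (fun l : seq X =>
          match drop tau l with
          | [::] => 0
          | x :: _ =>
              (eta tau ^+ 2 *
               ((noise Hx bx H b (sgd Hx bx eta 0 w0 (take tau l)) x)^T *m
                mxprod (fun i : nat => 1%:M - eta i *: H)
                  (rev (iota tau.+1 (T - tau))) *m H *m
                mxprod (fun i : nat => 1%:M - eta i *: H)
                  (iota tau.+1 (T - tau)) *m noise Hx bx H b
                                               (sgd Hx bx eta 0 w0
                                                 (take tau l))
                                               x)
                 0 0)%:E
          end) <= (bnd tau)%:E)%E by rewrite -e => /andP[].
  apply: (@iid_le2 R dX X mu tau (T - tau) _ (fun l x => (eta tau ^+ 2 *
               ((noise Hx bx H b (sgd Hx bx eta 0 w0 l) x)^T *m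
                (Q^T *m diag_mx (gt tau) *m Q) *m noise Hx bx H b (sgd Hx bx eta 0 w0 l) x)
                 0 0)%:E) _).
  - by rewrite lee_fin.
  - move=> l sl x l'; rewrite drop_size_cat // take_size_cat //=.
    by rewrite -MM !mulmxA.
  - move=> l sl; apply/andP; split.
      apply: integral_ge0 => x _; rewrite lee_fin quad_diag; apply: mulr_ge0; first exact: sqr_ge0.
      by apply: sumr_ge0 => k _; apply: mulr_ge0 => //; exact: sqr_ge0.
    apply: (tau_bound Hx_meas bx_meas _ _ _ _ _ _ QQ HE (noise_bound l)) => //.
    exact: sqr_ge0.
rewrite sumEFin lee_fin.
pose F (x : R) := x ^+ 2 * \sum_(k < T.+1)
   (eta k ^+ 2 * \prod_(k.+1 <= i < T.+1) (1 - eta i * x) ^+ 2).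
have io : forall k : nat, index_iota k.+1 T.+1 = iota k.+1 (T - k).
  by move=> k; rewrite /index_iota subSS.
have -> : \sum_(tau < T.+1) bnd tau = sigma ^+ 2 * \sum_(k < d) F (m 0 k).
  transitivity (sigma ^+ 2 * \sum_(tau < T.+1) \sum_(k < d) (eta tau ^+ 2 *
      (m 0 k ^+ 2 * \prod_(i <- iota tau.+1 (T - tau)) (1 - eta i * m 0 k) ^+ 2))).
    rewrite mulr_sumr; apply: eq_bigr => tau _; rewrite /bnd !mulr_sumr.
    apply: eq_bigr => k _; rewrite mxE prodrXl; ring.
  congr (_ * _); rewrite exchange_big /=; apply: eq_bigr => k _.
  rewrite /F mulr_sumr; apply: eq_bigr => tau _; rewrite io; ring.
by rewrite sum_perm.
Qed.
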